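(* For integers $n\ge1$, $t\ge0$ and $\bm{N}=(t,t,\ldots,t,-nt)\in\mathbb{Z}^{n+1}$, \[ (t+1)^{\binom n2}\;\ge\;K_n(\bm{N})\;\ge\;\prod_{i=1}^{n-1}(it+1). \]
   Context: $K_n(\bm{N})$ is the number of integer vectors $(f_{ij})_{0\le i<j\le n}\in\mathbb{Z}_{\ge0}^{\binom{n+1}{2}}$ with $\sum_{j>i} f_{ij}-\sum_{k<i} f_{ki}=N_i$ for every $i\in\{0,\ldots,n\}$. *)

(* Defs.v *)
From mathcomp Require Import all_boot all_order all_algebra.
Set Implicit Arguments. Unset Strict Implicit. Unset Printing Implicit Defensive.
Import Order.TTheory GRing.Theory Num.Theory.

Definition edges (n : nat) := {p : 'I_n.+1 * 'I_n.+1 | (p.1 < p.2)%N}.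

Definition flow_vec (n : nat) := {ffun edges n -> nat}.

Definition is_flow (n : nat) (N : 'I_n.+1 -> int) (f : flow_vec n) : bool :=
  [forall i : 'I_n.+1,
     ((\sum_(e : edges n | (sval e).1 == i) (f e)%:Z)
      - (\sum_(e : edges n | (sval e).2 == i) (f e)%:Z))%R == N i].

(* K_n(N) = the number of such vectors: it is the size of any duplicate-free
   list enumerating exactly the solutions. *)
Definition enumerates_flows (n : nat) (N : 'I_n.+1 -> int) (s : seq (flow_vec n)) : Prop :=
  uniq s /\ forall f : flow_vec n, (f \in s) = is_flow N f.

Definition Nvec (n t : nat) : 'I_n.+1 -> int :=
  fun i => if (i < n)%N then (t%:Z)%R else (- (n * t)%:Z)%R.
Arguments Nvec : clear implicits.

(* Main.v *)
Require Import Defs.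
From mathcomp Require Import all_boot all_order all_algebra.
From mathcomp Require Import zify.
Set Implicit Arguments. Unset Strict Implicit. Unset Printing Implicit Defensive.
Import Order.TTheory GRing.Theory Num.Theory.

Definition Aof (c : seq (seq nat)) (i j : nat) : nat := nth 0 (nth [::] c j.-1) i.
Definition inn c k := \sum_(0 <= i < k) Aof c i k.
Definition out c k := \sum_(0 <= j < (size c).+1 | k < j) Aof c k j.
Definition wf (c : seq (seq nat)) :=
  all (fun j => size (nth [::] c j) == j.+1) (iota 0 (size c)).
Definition valid t c := wf c && all (fun k => out c k <= t + inn c k) (iota 0 (size c).+1).
Definition state t c := [seq t + inn c k - out c k | k <- iota 0 (size c).+1].
Fixpoint boxes (r : seq nat) : seq (seq nat) :=
  if r is a :: r' then [seq x :: y | x <- iota 0 a.+1, y <- boxes r'] else [:: [::]].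
Fixpoint gen t m : seq (seq (seq nat)) :=
  if m is m'.+1 then [seq rcons c x | c <- gen t m', x <- boxes (state t c)]
  else [:: [::]].

Lemma size_ap (s : seq nat) (t : seq (seq nat)) :
  size [seq x :: y | x <- s, y <- t] = size s * size t.
Proof. elim: s => //= x s IH. by rewrite size_cat size_map IH. Qed.

Lemma size_boxes r : size (boxes r) = \prod_(a <- r) a.+1.
Proof. elim: r => [|a r IH]; first by rewrite big_nil.
rewrite big_cons -IH.
have E : boxes (a :: r) = [seq x :: y | x <- iota 0 a.+1, y <- boxes r] by [].
by rewrite E size_ap size_iota. Qed.

Lemma uniq_boxes r : uniq (boxes r).
Proof. elim: r => [|a r IH] //.
have E : boxes (a :: r) = [seq x :: y | x <- iota 0 a.+1, y <- boxes r] by [].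
rewrite E; apply: allpairs_uniq => //; first exact: iota_uniq.
by move=> [x y] [x' y'] _ _ /= [-> ->]. Qed.

Lemma mem_boxes r x : (x \in boxes r) = (size x == size r) && all2 leq x r.
Proof.
elim: r x => [|a r IH] x.
  by case: x.
have E : boxes (a :: r) = [seq x :: y | x <- iota 0 a.+1, y <- boxes r] by [].
rewrite E; case: x => [|b x].
  by apply/allpairsP => -[p [_ _ //]].
apply/allpairsP/idP => [[[p q] [/= Hp Hq [-> ->]]]|/andP[/eqP[Hs] /andP[Hb Ha]]].
  move: Hq; rewrite IH => /andP[/eqP -> ->]; rewrite eqxx /= andbT.
  by move: Hp; rewrite !inE ?mem_iota; lia.
exists (b, x) => /=; split => //; first by rewrite !inE ?mem_iota; lia.
by rewrite IH Hs eqxx; exact: Ha.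
Qed.

Lemma all2_nth (x r : seq nat) : size x = size r ->
  all2 leq x r = [forall k : 'I_(size r), nth 0 x k <= nth 0 r k].
Proof.
elim: r x => [|a r IH] [|b x] //= Hs.
- by apply/esym/forallP => -[].
- case: Hs => Hs. rewrite IH //; apply/andP/forallP => [[H1 /forallP H2] k|H].
    case: k => [[|k] Hk] //=. exact: (H2 (Ordinal (Hk : k < size r))).
  split; first exact: (H ord0).
  apply/forallP => k. exact: (H (lift ord0 k)).
Qed.

Lemma sum_const_seq (T : Type) (s : seq T) k : \sum_(x <- s) k = size s * k.
Proof. elim: s => [|a s IH]; by rewrite ?big_nil ?big_cons ?IH ?mulSn. Qed.

Lemma prod_lb (r : seq nat) : (\sum_(a <- r) a).+1 <= \prod_(a <- r) a.+1.
Proof.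
elim: r => [|a r IH]; first by rewrite !big_nil.
rewrite !big_cons. have := leq_mul (leqnn a.+1) IH. nia.
Qed.

Lemma prod_ub (r : seq nat) t : 0 < size r -> \sum_(a <- r) a = size r * t ->
  \prod_(a <- r) a.+1 <= t.+1 ^ size r.
Proof.
move=> Hp Hs.
pose L := size r.
have := @leif_AGM_scaled int _ (mem 'I_L) (fun i : 'I_L => Posz (nth 0 r i).+1).
rewrite card_ord => H0.
have := (H0 _).1; clear H0.
have -> : (\prod_(i in 'I_L) (Posz (nth 0 r i).+1 *+ L))%R = Posz ((\prod_(a <- r) a.+1) * L ^ L).
  have E : forall a b : nat, Posz (a * b) = (Posz a *+ b)%R by move=> a b; rewrite -mulr_natr natz.
  rewrite prodrMn_const card_ord -(big_morph Posz PoszM (erefl (Posz 1))) E.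
  congr (Posz _ *+ _)%R; rewrite (big_nth 0) big_mkord; apply: eq_bigl => i; by rewrite inE.
have -> : (\sum_(i in 'I_L) Posz (nth 0 r i).+1)%R = Posz (L * t.+1).
  rewrite -(big_morph Posz PoszD (erefl (Posz 0))).
  rewrite -(big_mkord xpredT (fun i => (nth 0 r i).+1)) -(big_nth 0 xpredT (fun a => a.+1)).
  have E : forall s : seq nat, \sum_(a <- s) a.+1 = \sum_(a <- s) a + size s.
    by elim => [|a s IH]; rewrite ?big_nil ?big_cons ?IH //= addnS addSn addnA.
  rewrite E Hs; congr Posz; rewrite /L; lia.
have E2 : forall a n, (Posz a ^+ n)%R = Posz (a ^ n) by move=> a n; rewrite -!natz natrX.
rewrite E2 lez_nat expnMn mulnC => H.
have HL : 0 < L ^ L by rewrite expn_gt0 Hp.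
rewrite -(leq_pmul2l HL); apply: H => i _. exact: mulrn_wge0.
Qed.
Lemma Aof_rcons c x i j : Aof (rcons c x) i j =
  if j.-1 < size c then Aof c i j else if j.-1 == size c then nth 0 x i else 0.
Proof. rewrite /Aof nth_rcons; case: ifP => //; case: ifP => //; by rewrite nth_nil. Qed.

Lemma inn_rcons c x k : k <= size c -> inn (rcons c x) k = inn c k.
Proof.
move=> Hk; rewrite /inn; apply: eq_big_nat => i /andP[_ Hi].
by rewrite Aof_rcons ifT //; lia.
Qed.

Lemma inn_rcons_last c x :
  inn (rcons c x) (size c).+1 = \sum_(0 <= i < (size c).+1) nth 0 x i.
Proof.
rewrite /inn; apply: eq_big_nat => i _.
by rewrite Aof_rcons /= ltnn eqxx.
Qed.

Lemma out_rcons c x k : k <= size c -> out (rcons c x) k = out c k + nth 0 x k.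
Proof.
move=> Hk; rewrite /out size_rcons big_mkcond big_nat_recr //= -/(out c k).
rewrite Aof_rcons /= ltnn eqxx ifT; last by lia.
congr addn; rewrite /out [RHS]big_mkcond; apply: eq_big_nat => j /andP[_ Hj].
case: ifP => // Hkj; rewrite Aof_rcons ifT //; lia.
Qed.

Lemma out_rcons_last c x : out (rcons c x) (size c).+1 = 0.
Proof.
rewrite /out big_nat_cond big1 // => j /andP[/andP[_ Hj] Hk].
rewrite size_rcons in Hj; lia.
Qed.

Lemma wf_rcons c x : wf (rcons c x) = wf c && (size x == (size c).+1).
Proof.
rewrite /wf size_rcons -addn1 iotaD all_cat /= add0n nth_rcons ltnn eqxx andbT.
rewrite addn1; congr andb; apply: eq_in_all => j; rewrite mem_iota => Hj.
by rewrite nth_rcons ifT //; lia.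
Qed.

Lemma nth_state t c k : k < (size c).+1 ->
  nth 0 (state t c) k = t + inn c k - out c k.
Proof. by move=> Hk; rewrite /state (nth_map 0) ?size_iota ?nth_iota. Qed.

Lemma size_state t c : size (state t c) = (size c).+1.
Proof. by rewrite /state size_map size_iota. Qed.

Lemma valid_rcons t c x :
  valid t (rcons c x) <-> valid t c /\ x \in boxes (state t c).
Proof.
rewrite /valid wf_rcons mem_boxes size_state size_rcons.
split.
- move=> /andP[/andP[Hw /eqP Hs] /allP Ha].
  split; apply/andP; split => //; first (try by rewrite Hs).
    apply/allP => k; rewrite mem_iota => Hk.
    have := Ha k; rewrite mem_iota => /(_ ltac:(lia)).
    rewrite out_rcons ?inn_rcons; lia.
  rewrite Hs eqxx //. rewrite all2_nth ?size_state ?Hs //.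
  apply/forallP => k; have Hk := ltn_ord k.
  rewrite nth_state //.
  have := Ha k; rewrite mem_iota => /(_ ltac:(lia)).
  rewrite out_rcons ?inn_rcons; lia.
- move=> [/andP[Hw /allP Ha] /andP[/eqP Hs Hb]].
  move: Hb; rewrite all2_nth ?size_state // => /forallP Hb.
  apply/andP; split; first by rewrite Hw Hs eqxx.
  apply/allP => k; rewrite mem_iota => Hk.
  case: (ltnP k (size c).+1) => Hk2.
    have := Ha k; rewrite mem_iota => /(_ ltac:(lia)).

    have := Hb (Ordinal Hk2); rewrite /= nth_state //.
    rewrite out_rcons ?inn_rcons; lia.
  have -> : k = (size c).+1 by lia.
  by rewrite out_rcons_last.
Qed.

Lemma valid_nil t : valid t [::].
Proof.
rewrite /valid /wf /= andbT /out /inn big_mkcond big_nat1 /= big_geq //.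
Qed.

Lemma genS t m : gen t m.+1 = [seq rcons c x | c <- gen t m, x <- boxes (state t c)].
Proof. by []. Qed.

Lemma mem_gen t m c : c \in gen t m <-> size c = m /\ valid t c.
Proof.
elim: m c => [|m IH] c.
  rewrite /= mem_seq1; split => [/eqP ->|[/eqP]]; last by case: c.
  by split => //; exact: valid_nil.
rewrite genS; split.
  move=> /allpairsPdep [c' [x [Hc Hx ->]]].
  have [Hs Hv] := (IH c').1 Hc.
  by rewrite size_rcons Hs; split => //; apply/valid_rcons.
case/lastP: c => [[//]|c' x]; rewrite size_rcons => -[[Hs] /valid_rcons [Hv Hx]].
apply/allpairsPdep; exists c', x; split => //; exact/IH.
Qed.

Lemma uniq_gen t m : uniq (gen t m).
Proof.
elim: m => [|m IH] //; rewrite genS.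
apply: allpairs_uniq_dep => //; first by move=> c _; exact: uniq_boxes.
move=> [c1 x1] [c2 x2] _ _ /= /rcons_inj [-> ->] //.
Qed.

Lemma sum_state t c : valid t c ->
  \sum_(0 <= k < (size c).+1) (t + inn c k - out c k) = (size c).+1 * t.
Proof.
elim/last_ind: c => [|c x IH].
  move=> _; rewrite /= /inn /out big_nat1 big_geq // big1 ?subn0 ?mul1n ?addn0 // => j _; by rewrite /Aof !nth_nil.
move=> /valid_rcons [Hv Hx]; have {}IH := IH Hv.
move: Hx; rewrite mem_boxes size_state => /andP[/eqP Hs Hx].
move: Hx; rewrite all2_nth ?size_state // => /forallP Hx.
rewrite size_rcons big_nat_recr // inn_rcons_last out_rcons_last.
have E : \sum_(0 <= k < (size c).+1) (t + inn (rcons c x) k - out (rcons c x) k)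
   = \sum_(0 <= k < (size c).+1) ((t + inn c k - out c k) - nth 0 x k).
  apply: eq_big_nat => k /andP[_ Hk]; rewrite inn_rcons ?out_rcons; lia.
have Hle : forall k, nth 0 x k <= t + inn c k - out c k.
  move=> k; case: (ltnP k (size c).+1) => Hk.
    by have := Hx (Ordinal Hk); rewrite /= nth_state.
  by rewrite nth_default // Hs.
have Hsum : \sum_(0 <= k < (size c).+1) nth 0 x k <= (size c).+1 * t.
  by rewrite -IH; apply: leq_sum => k _.
rewrite E sumnB ?IH //=; lia.
Qed.

Lemma sum_state_seq t c : valid t c -> \sum_(a <- state t c) a = (size c).+1 * t.
Proof.
move=> Hv; rewrite /state big_map -(sum_state Hv) /index_iota subn0 //.
Qed.

Lemma size_genS t m : size (gen t m.+1) = \sum_(c <- gen t m) \prod_(a <- state t c) a.+1.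
Proof.
rewrite genS size_allpairs_dep sumnE big_map; apply: eq_bigr => c _; exact: size_boxes.
Qed.

Lemma leq_sum_seq (T : eqType) (s : seq T) (F G : T -> nat) :
  (forall x, x \in s -> true -> F x <= G x) -> \sum_(x <- s) F x <= \sum_(x <- s) G x.
Proof.
elim: s => [|a s IH] H; rewrite ?big_nil ?big_cons //.
apply: leq_add; first by apply: H; rewrite ?mem_head.
by apply: IH => x Hx _; apply: H; rewrite // inE Hx orbT.
Qed.

Lemma gen_bounds t m :
  \prod_(1 <= i < m.+1) (i * t + 1) <= size (gen t m) <= t.+1 ^ 'C(m.+1, 2).
Proof.
elim: m => [|m IH]; first by rewrite big_geq.
move/andP: IH => [IH1 IH2].
have Hb : forall c, c \in gen t m ->
   (m.+1 * t).+1 <= \prod_(a <- state t c) a.+1 <= t.+1 ^ m.+1.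
  move=> c /mem_gen [Hs Hv]; apply/andP; split.
    by rewrite -Hs -(sum_state_seq Hv); exact: prod_lb.
  rewrite -Hs -(size_state t c); apply: prod_ub; rewrite size_state //.
  exact: sum_state_seq.
rewrite size_genS; apply/andP; split.
  rewrite big_nat_recr //=.
  apply: (leq_trans (leq_mul IH1 (leqnn _))).
  rewrite -sum_const_seq; apply: leq_sum_seq => c Hc _.
  by have /andP[H _] := Hb c Hc; rewrite addn1.
apply: (@leq_trans (\sum_(c <- gen t m) t.+1 ^ m.+1)).
  apply: leq_sum_seq => c Hc _.
  by have /andP[_ H] := Hb c Hc.
rewrite sum_const_seq binS bin1 expnD leq_mul2r IH2 orbT //.
Qed.

Definition fv n (f : flow_vec n) (i j : nat) : nat :=
  if (insub (inord i, inord j) : option (edges n)) is Some e then f e else 0.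

Lemma fvE n (f : flow_vec n) (e : edges n) : f e = fv f (sval e).1 (sval e).2.
Proof.
rewrite /fv.
have -> : (inord (sval e).1, inord (sval e).2) = val e :> ('I_n.+1 * 'I_n.+1)
  by rewrite !inord_val -surjective_pairing.
by rewrite valK.
Qed.

Lemma sum_edges_sub n (P : pred ('I_n.+1 * 'I_n.+1)) (F : _ -> nat) :
  \sum_(e : edges n | P (sval e)) F (sval e) = \sum_(p : 'I_n.+1 * 'I_n.+1 | (p.1 < p.2) && P p) F p.
Proof.
rewrite [RHS](reindex_omap (val : edges n -> _) insub); last first.
  by move=> p /andP[Hp _]; rewrite insubT.
apply: eq_bigl => e; rewrite valK eqxx (valP e) andbT //.
Qed.

Lemma sum_out_edges n (G : edges n -> nat) (h : nat -> nat -> nat) (i : 'I_n.+1) :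
  (forall e, G e = h (sval e).1 (sval e).2) ->
  \sum_(e : edges n | (sval e).1 == i) G e = \sum_(0 <= j < n.+1 | i < j) h i j.
Proof.
move=> HG; rewrite (eq_bigr _ (fun e _ => HG e)).
rewrite (sum_edges_sub (fun p => p.1 == i) (fun p => h p.1 p.2)).
rewrite (eq_bigl (fun p : 'I_n.+1 * 'I_n.+1 => (p.1 == i) && (i < p.2))); last first.
  by move=> [a b] /=; case: (eqVneq a i) => [->|]; rewrite ?andbT ?andbF.
rewrite -(pair_big_dep (fun a => a == i) (fun a (b : 'I_n.+1) => i < b) (fun a (b : 'I_n.+1) => h a b)) big_pred1_eq.
by rewrite big_mkord.
Qed.

Lemma sum_in_edges n (G : edges n -> nat) (h : nat -> nat -> nat) (i : 'I_n.+1) :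
  (forall e, G e = h (sval e).1 (sval e).2) ->
  \sum_(e : edges n | (sval e).2 == i) G e = \sum_(0 <= k < i) h k i.
Proof.
move=> HG; rewrite (eq_bigr _ (fun e _ => HG e)).
rewrite (sum_edges_sub (fun p => p.2 == i) (fun p => h p.1 p.2)).
rewrite (eq_bigl (fun p : 'I_n.+1 * 'I_n.+1 => xpredT p.1 && ((p.2 == i) && (p.1 < i)))); last first.
  by move=> [a b] /=; case: (eqVneq b i) => [->|]; rewrite ?andbT ?andbF.
rewrite -(pair_big_dep xpredT (fun (a : 'I_n.+1) (b : 'I_n.+1) => (b == i) && (a < i)) (fun (a : 'I_n.+1) (b : 'I_n.+1) => h a b)).
under eq_bigr => a _ do rewrite big_mkcondr big_pred1_eq.
rewrite -big_mkcond -(big_mkord (fun a => a < i) (fun a => h a i)).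
rewrite (big_nat_widen 0 i n.+1 xpredT) //; exact: ltnW.
Qed.

Lemma sumZ (I : Type) (r : seq I) (P : pred I) (F : I -> nat) :
  (\sum_(i <- r | P i) Posz (F i))%R = Posz (\sum_(i <- r | P i) F i).
Proof. by rewrite (big_morph Posz PoszD (erefl (Posz 0))). Qed.

Definition toflow n t c : flow_vec n :=
  [ffun e : edges n => if (sval e).2 < n then Aof c (sval e).1 (sval e).2
                       else nth 0 (state t c) (sval e).1].

Lemma valid_le t c k : valid t c -> k < (size c).+1 -> out c k <= t + inn c k.
Proof. by move=> /andP[_ /allP H] Hk; apply: H; rewrite mem_iota. Qed.

Lemma toflow_is_flow m t c : valid t c -> size c = m ->
  is_flow (Nvec m.+1 t) (toflow m.+1 t c).
Proof.
move=> Hv Hs; apply/forallP => i.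
pose h := fun a b => if b < m.+1 then Aof c a b else nth 0 (state t c) a.
have HG : forall e, toflow m.+1 t c e = h (sval e).1 (sval e).2 by move=> e; rewrite ffunE.
rewrite !sumZ (@sum_out_edges _ _ _ i HG) (@sum_in_edges _ _ _ i HG).
rewrite big_mkcond big_nat_recr //= -big_mkcond.
have Hout : \sum_(0 <= j < m.+1 | i < j) h i j = out c i.
  rewrite /out Hs big_mkcond [RHS]big_mkcond; apply: eq_big_nat => j /andP[_ Hj]; by rewrite /h Hj.
have Hlast : h i m.+1 = nth 0 (state t c) i by rewrite /h ltnn.
rewrite Hout Hlast /Nvec.
case: (ltnP i m.+1) => Hi.
  have Hin : \sum_(0 <= k < i) h k i = inn c i.
    by apply: eq_big_nat => k _; rewrite /h Hi.
  rewrite Hin nth_state ?Hs //.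
  have := valid_le Hv (_ : i < (size c).+1); rewrite Hs => /(_ Hi) H.
  apply/eqP; lia.
have Hi' : (i : nat) = m.+1 by have := ltn_ord i; lia.
have -> : \sum_(0 <= k < i) h k i = \sum_(0 <= k < (size c).+1) (t + inn c k - out c k).
  rewrite Hi' Hs; apply: eq_big_nat => k /andP[_ Hk]; rewrite /h ltnn nth_state // Hs //.
rewrite sum_state // Hs.
have -> : out c i = 0.
  rewrite /out big_nat_cond big1 // => j /andP[/andP[_ Hj] Hk]; lia.
apply/eqP; lia.
Qed.

Definition ofFlow m (f : flow_vec m.+1) : seq (seq nat) :=
  [seq [seq fv f i j | i <- iota 0 j] | j <- iota 1 m].

Lemma size_ofFlow m (f : flow_vec m.+1) : size (ofFlow f) = m.
Proof. by rewrite size_map size_iota. Qed.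

Lemma Aof_ofFlow m (f : flow_vec m.+1) i j : 0 < j <= m -> i < j ->
  Aof (ofFlow f) i j = fv f i j.
Proof.
move=> /andP[Hj1 Hj2] Hij; rewrite /Aof /ofFlow (nth_map 0) ?size_iota; last by lia.
rewrite nth_iota; last by lia.
have -> : 1 + j.-1 = j by lia.
by rewrite (nth_map 0) ?size_iota // nth_iota.
Qed.

Lemma wf_ofFlow m (f : flow_vec m.+1) : wf (ofFlow f).
Proof.
apply/allP => j; rewrite size_ofFlow mem_iota => Hj.
rewrite /ofFlow (nth_map 0) ?size_iota; last by lia.
by rewrite size_map size_iota nth_iota; last by lia.
Qed.

Lemma flow_at m t (f : flow_vec m.+1) i : is_flow (Nvec m.+1 t) f -> i < m.+1 ->
  out (ofFlow f) i + fv f i m.+1 = t + inn (ofFlow f) i.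
Proof.
move=> /forallP /(_ (inord i)) H Hi.
have HG : forall e, f e = fv f (sval e).1 (sval e).2 by exact: fvE.
move: H; rewrite !sumZ (@sum_out_edges _ _ _ (inord i) HG) (@sum_in_edges _ _ _ (inord i) HG).
rewrite /Nvec !inordK ?Hi; try lia.
rewrite big_mkcond big_nat_recr //= -big_mkcond ifT //.
have -> : \sum_(0 <= j < m.+1 | i < j) fv f i j = out (ofFlow f) i.
  rewrite /out size_ofFlow big_mkcond [RHS]big_mkcond.
  apply: eq_big_nat => j /andP[_ Hj]; case: ifP => // Hij.
  by rewrite Aof_ofFlow //; lia.
have -> : \sum_(0 <= k < i) fv f k i = inn (ofFlow f) i.
  apply: eq_big_nat => k /andP[_ Hk]; rewrite Aof_ofFlow //; lia.
move/eqP; lia.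
Qed.

Lemma ofFlow_ok m t (f : flow_vec m.+1) : is_flow (Nvec m.+1 t) f ->
  valid t (ofFlow f) /\ toflow m.+1 t (ofFlow f) = f.
Proof.
move=> Hf.
have Hv : valid t (ofFlow f).
  rewrite /valid wf_ofFlow andTb; apply/allP => k; rewrite size_ofFlow mem_iota => Hk.
  have := flow_at Hf (_ : k < m.+1); lia.
split => //; apply/ffunP => e; rewrite ffunE [RHS]fvE.
case: e => -[a b] /= He; have Hb := ltn_ord b.
case: ifP => Hb2.
  by rewrite Aof_ofFlow //; lia.
have Hb3 : (b : nat) = m.+1 by lia.
rewrite Hb3 nth_state; last by rewrite size_ofFlow; lia.
have := flow_at Hf (_ : a < m.+1); lia.
Qed.

Lemma fv_toflow m t c i j : i < j <= m -> fv (toflow m.+1 t c) i j = Aof c i j.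
Proof.
move=> /andP[Hij Hj].
have P : (inord i : 'I_m.+2) < (inord j : 'I_m.+2) by rewrite !inordK; lia.
rewrite /fv insubT /= ffunE /= !inordK; try lia.
by rewrite ifT //; lia.
Qed.

Lemma toflow_inj m t c1 c2 : wf c1 -> wf c2 -> size c1 = m -> size c2 = m ->
  toflow m.+1 t c1 = toflow m.+1 t c2 -> c1 = c2.
Proof.
move=> /allP W1 /allP W2 S1 S2 H.
apply: (@eq_from_nth _ [::]); first by rewrite S1 S2.
move=> j Hj.
have := W1 j; rewrite mem_iota => /(_ ltac:(lia)) /eqP Z1.
have := W2 j; rewrite mem_iota => /(_ ltac:(lia)) /eqP Z2.
apply: (@eq_from_nth _ 0); first by rewrite Z1 Z2.
move=> i Hi; rewrite Z1 in Hi.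
have := congr1 (fun f => fv f i j.+1) H; rewrite !fv_toflow; try lia.
by rewrite /Aof.
Qed.

Theorem proposition2p17 (n t : nat) : (1 <= n)%N ->
  exists s : seq (flow_vec n),
    enumerates_flows (Nvec n t) s /\
    ((t.+1 ^ 'C(n, 2) >= size s)%N /\
     (size s >= \prod_(1 <= i < n) (i * t + 1))%N).
Proof.
case: n => [//|m] _.
exists (map (toflow m.+1 t) (gen t m)).
have /andP[B1 B2] := gen_bounds t m.
split; last by rewrite size_map; split.
split.
  rewrite map_inj_in_uniq ?uniq_gen // => c1 c2 /mem_gen [S1 V1] /mem_gen [S2 V2].
  apply: toflow_inj S1 S2.
  - by case/andP: V1.
  - by case/andP: V2.
move=> f; apply/mapP/idP => [[c /mem_gen [Hs Hv] ->]|Hf].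
  exact: toflow_is_flow.
have [Hv Heq] := ofFlow_ok Hf.
exists (ofFlow f) => //; apply/mem_gen; split => //; exact: size_ofFlow.
Qed.
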